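(* Skeptic can weakly force the event \[ A_3:=\Bigl\{\xi:\ \limsup_{n\to\infty}s_n=\infty\ \text{and}\ \liminf_{n\to\infty}s_n=-\infty\Bigr\}. \]
   Context: Fair-coin game: in rounds $n=1,2,\dots$ Skeptic announces $M_n\in\mathbb{R}$ (depending only on $x_1,\dots,x_{n-1}$), then Reality announces $x_n\in\{-1,1\}$. A path is an infinite sequence $\xi=x_1x_2\cdots\in\{-1,1\}^{\mathbb{N}}$, and $\Omega$ is the set of paths. We write $s_n:=x_1+\cdots+x_n$, with $s_0=0$. The capital process of a strategy with zero initial capital is $\mathcal{K}^{\mathcal{P}}_n=\sum_{k=1}^nM_kx_k$. Skeptic weakly forces $E\subseteq\Omega$ if some strategy $\mathcal{P}$ has $\mathcal{K}^{\mathcal{P}}_n(\xi)\ge-1$ for all $\xi\in\Omega$ and $n\ge0$, and $\limsup_n\mathcal{K}^{\mathcal{P}}_n(\xi)=\infty$ for every $\xi\notin E$. *)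

(* Defs.v *)
From Stdlib Require Import Reals List.
Open Scope R_scope.

(* A path xi : nat -> bool encodes x_{k+1} = xval (xi k), with true = +1, false = -1. *)
Definition path := nat -> bool.

Definition xval (b : bool) : R := if b then 1 else -1.

Definition prefix (xi : path) (n : nat) : list bool := map xi (seq 0 n).

(* A strategy for Skeptic: M_n depends only on x_1..x_{n-1}. *)
Definition strategy := list bool -> R.

Fixpoint capital (P : strategy) (xi : path) (n : nat) : R :=
  match n with
  | O => 0
  | S m => capital P xi m + P (prefix xi m) * xval (xi m)
  end.

Fixpoint spos (xi : path) (n : nat) : R :=
  match n with
  | O => 0
  | S m => spos xi m + xval (xi m)
  end.

Definition limsup_infty (u : nat -> R) : Prop :=
  forall (C : R) (N : nat), exists n, (N <= n)%nat /\ C < u n.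

Definition liminf_minfty (u : nat -> R) : Prop :=
  forall (C : R) (N : nat), exists n, (N <= n)%nat /\ u n < C.

Definition weakly_forces (E : path -> Prop) : Prop :=
  exists P : strategy,
    (forall (xi : path) (n : nat), -1 <= capital P xi n) /\
    (forall xi : path, ~ E xi -> limsup_infty (capital P xi)).

Definition A3 (xi : path) : Prop :=
  limsup_infty (spos xi) /\ liminf_minfty (spos xi).

(* Main.v *)
Require Import Defs.
From Stdlib Require Import Reals List.
From Stdlib Require Import Lra Lia Classical.
Open Scope R_scope.

Definition step (st : nat * nat) (b : bool) : nat * nat :=
  match st with
  | (c, u) => if b then match u with O => (S c, O) | S u' => (c, u') end
              else (c, S u)
  end.

Definition stl (l : list bool) : nat * nat := fold_left step l (O, O).

Definition gg (t : R) : R := t + 3 - / (t + 2).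
Definition ee (c : nat) : R := / 5 * (/ 4) ^ c.
Definition Dl (t : R) : R := / ((t + 1) * (t + 2) * (t + 3)).

Definition Pp (l : list bool) : R :=
  match stl l with (c, u) => ee c * (gg (INR u - 1) - gg (INR u + 1)) / 2 end.

Definition VV (xi : path) (n : nat) : R :=
  match stl (prefix xi n) with (c, u) => ee c * gg (INR u) end.

Lemma prefix_S xi n : prefix xi (S n) = prefix xi n ++ xi n :: nil.
Proof. unfold prefix. rewrite seq_S, map_app. reflexivity. Qed.

Lemma stl_S xi n : stl (prefix xi (S n)) = step (stl (prefix xi n)) (xi n).
Proof. unfold stl. rewrite prefix_S, fold_left_app. reflexivity. Qed.

Lemma ee_pos c : 0 < ee c.
Proof. unfold ee. apply Rmult_lt_0_compat. lra. apply pow_lt. lra. Qed.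

Lemma ee_S c : ee (S c) = ee c / 4.
Proof. unfold ee. simpl. field. Qed.

Lemma ee_anti c k : ee (c + k) <= ee c.
Proof.
  induction k. rewrite Nat.add_0_r; lra.
  rewrite Nat.add_succ_r, ee_S. pose proof (ee_pos (c + k)). lra.
Qed.

Lemma gg_ge t : 0 <= t -> t + 2 <= gg t.
Proof.
  intro Ht. unfold gg.
  assert (/ (t + 2) <= / 2) by (apply Rinv_le_contravar; lra).
  assert (0 < / 2) by lra. lra.
Qed.

Lemma Dl_id t : 0 <= t -> gg t - (gg (t - 1) + gg (t + 1)) / 2 = Dl t.
Proof.
  intro Ht. unfold gg, Dl.
  replace (t - 1 + 2) with (t + 1) by ring.
  replace (t + 1 + 2) with (t + 3) by ring.
  field. repeat split; lra.
Qed.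

Lemma Dl_pos t : 0 <= t -> 0 < Dl t.
Proof. intro. unfold Dl. apply Rinv_0_lt_compat.
  apply Rmult_lt_0_compat; [apply Rmult_lt_0_compat|]; lra. Qed.

Lemma Dl_anti t U : 0 <= t -> t <= U -> Dl U <= Dl t.
Proof.
  intros. unfold Dl. apply Rinv_le_contravar.
  apply Rmult_lt_0_compat; [apply Rmult_lt_0_compat|]; lra.
  apply Rmult_le_compat; try lra.
  apply Rmult_le_pos; lra. apply Rmult_le_compat; lra.
Qed.

Lemma mono xi n : forall c u, stl (prefix xi n) = (c, u) ->
  capital Pp xi (S n) - VV xi (S n) >= capital Pp xi n - VV xi n + ee c * Dl (INR u).
Proof.
  intros c u Hs. simpl capital. unfold VV. rewrite stl_S, Hs.
  unfold Pp. rewrite Hs.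
  pose proof (ee_pos c) as He. pose proof (pos_INR u) as Hu.
  pose proof (Dl_id _ Hu) as Hid.
  destruct (xi n); simpl step; unfold xval.
  - destruct u as [|u'].
    + rewrite ee_S. simpl INR.
      replace (0 - 1) with (-1) by ring. replace (0 + 1) with 1 by ring.
      assert (g1 : gg (-1) = 1) by (unfold gg; field).
      assert (g2 : gg 1 = 11/3) by (unfold gg; field).
      assert (g3 : gg 0 = 5/2) by (unfold gg; field).
      assert (g4 : Dl 0 = 1/6) by (unfold Dl; field).
      rewrite g1, g2, g3, g4. lra.
    + rewrite S_INR in *. 
      replace (INR u' + 1 - 1) with (INR u') in * by ring.
      set (t := INR u' + 1) in *.
      assert (ee c * ((gg (INR u') - gg (t + 1)) / 2) * 1 =
              ee c * gg (INR u') - ee c * gg t + ee c * Dl t).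
      { rewrite <- Hid. clear Hid Hu. unfold t. field. }
      lra.
  - rewrite S_INR.
    assert (ee c * ((gg (INR u - 1) - gg (INR u + 1)) / 2) * -1 =
            ee c * gg (INR u + 1) - ee c * gg (INR u) + ee c * Dl (INR u)).
    { rewrite <- Hid. field. }
    lra.
Qed.

Lemma VV0 xi : VV xi 0 = / 2.
Proof. unfold VV. simpl. unfold ee, gg. simpl. field. Qed.

Lemma VV_nonneg xi n : 0 <= VV xi n.
Proof.
  unfold VV. destruct (stl (prefix xi n)) as [c u].
  pose proof (ee_pos c). pose proof (gg_ge _ (pos_INR u)). pose proof (pos_INR u). nra.
Qed.

Lemma lower xi n : capital Pp xi n - VV xi n >= - / 2.
Proof.
  induction n.
  - rewrite VV0. simpl. lra.
  - destruct (stl (prefix xi n)) as [c u] eqn:Hs.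
    pose proof (mono xi n c u Hs).
    pose proof (ee_pos c). pose proof (Dl_pos _ (pos_INR u)). nra.
Qed.

Lemma lowerc xi n : capital Pp xi n >= - / 2.
Proof. pose proof (lower xi n). pose proof (VV_nonneg xi n). lra. Qed.

Lemma spos_inv xi n : forall c u, stl (prefix xi n) = (c, u) -> spos xi n = INR c - INR u.
Proof.
  induction n; intros c u Hs.
  - simpl in Hs. inversion Hs. simpl. ring.
  - rewrite stl_S in Hs. destruct (stl (prefix xi n)) as [c0 u0] eqn:H0.
    specialize (IHn c0 u0 eq_refl). simpl. rewrite IHn.
    destruct (xi n); simpl in Hs.
    + destruct u0; inversion Hs; subst. rewrite S_INR. simpl. ring.
      rewrite S_INR. simpl. ring.
    + inversion Hs; subst. rewrite S_INR. simpl. ring.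
Qed.

Lemma cbound xi N B : (forall n, (N <= n)%nat -> spos xi n <= B) ->
  forall k, INR (fst (stl (prefix xi (N + k)))) <= Rmax (INR (fst (stl (prefix xi N)))) B.
Proof.
  intros HB k. induction k.
  - rewrite Nat.add_0_r. apply Rmax_l.
  - rewrite Nat.add_succ_r, stl_S.
    destruct (stl (prefix xi (N + k))) as [c u] eqn:Hs. simpl in IHk.
    destruct (xi (N + k)%nat) eqn:Hx; simpl.
    + destruct u; simpl; auto.
      assert (E : stl (prefix xi (S (N + k))) = (S c, 0%nat)).
      { rewrite stl_S, Hs, Hx. reflexivity. }
      pose proof (spos_inv xi (S (N+k)) (S c) 0%nat E) as H.
      pose proof (HB (S (N + k)) ltac:(lia)) as H0.
      rewrite H in H0. simpl in H0. eapply Rle_trans; [|apply Rmax_r]. lra.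
    + auto.
Qed.

Lemma win xi : ~ limsup_infty (spos xi) -> limsup_infty (capital Pp xi).
Proof.
  intro H. unfold limsup_infty in H.
  apply not_all_ex_not in H as [B H]. apply not_all_ex_not in H as [N H].
  assert (HB : forall n, (N <= n)%nat -> spos xi n <= B).
  { intros n Hn. destruct (Rle_dec (spos xi n) B); auto. exfalso. apply H.
    exists n. split; auto. lra. }
  destruct (INR_unbounded (Rmax (INR (fst (stl (prefix xi N)))) B)) as [K HK].
  set (E := ee K).
  assert (HE : forall n, (N <= n)%nat -> E <= ee (fst (stl (prefix xi n)))).
  { intros n Hn. replace n with (N + (n - N))%nat by lia.
    pose proof (cbound xi N B HB (n - N)).
    assert (fst (stl (prefix xi (N + (n - N)))) <= K)%nat.
    { apply INR_le. lra. }
    unfold E. replace K with (fst (stl (prefix xi (N + (n - N)))) + (K - fst (stl (prefix xi (N + (n - N))))))%nat by lia.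
    apply ee_anti. }
  assert (HEp : 0 < E) by apply ee_pos.
  intros C N0.
  destruct (classic (forall C' N', exists n, (N' <= n)%nat /\ C' < INR (snd (stl (prefix xi n))))) as [Hu | Hu].
  - destruct (Hu ((C + /2) / E) (max N N0)) as [n [Hn Hc]].
    exists n. split. lia.
    pose proof (lower xi n). pose proof (HE n ltac:(lia)).
    unfold VV in H0. destruct (stl (prefix xi n)) as [c u] eqn:Hs. simpl in *.
    pose proof (gg_ge _ (pos_INR u)). pose proof (pos_INR u).
    assert (C + /2 < E * INR u).
    { apply (Rmult_lt_compat_l E) in Hc; auto. unfold Rdiv in Hc.
      rewrite <- Rmult_assoc, (Rmult_comm E), Rmult_assoc, Rinv_r in Hc; lra. }
    assert (E * INR u <= ee c * gg (INR u)) by nra. lra.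
  - apply not_all_ex_not in Hu as [U Hu]. apply not_all_ex_not in Hu as [N' Hu].
    assert (HU : forall n, (N' <= n)%nat -> INR (snd (stl (prefix xi n))) <= U).
    { intros n Hn. destruct (Rle_dec (INR (snd (stl (prefix xi n)))) U); auto. exfalso. apply Hu.
      exists n. split; auto. lra. }
    set (N1 := max N N'). set (d := Dl U).
    assert (U0 : 0 <= U) by (specialize (HU N' (le_n _)); pose proof (pos_INR (snd (stl (prefix xi N')))); lra).
    assert (Hd : 0 < d) by (apply Dl_pos; lra).
    assert (Hacc : forall k, capital Pp xi (N1 + k) - VV xi (N1 + k) >= capital Pp xi N1 - VV xi N1 + INR k * (E * d)).
    { induction k. simpl. rewrite Nat.add_0_r. lra.
      rewrite Nat.add_succ_r.
      destruct (stl (prefix xi (N1 + k))) as [c u] eqn:Hs.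
      pose proof (mono xi (N1 + k) c u Hs).
      pose proof (HE (N1 + k)%nat ltac:(lia)). rewrite Hs in H1. simpl in H1.
      pose proof (HU (N1 + k)%nat ltac:(lia)). rewrite Hs in H2. simpl in H2.
      pose proof (Dl_anti _ _ (pos_INR u) H2). fold d in H3.
      assert (E * d <= ee c * Dl (INR u)).
      { apply Rmult_le_compat; lra. }
      rewrite S_INR. lra. }
    destruct (INR_unbounded ((C + /2) / (E * d))) as [k Hk].
    exists (N1 + (k + N0))%nat. split. lia.
    pose proof (Hacc (k + N0)%nat). pose proof (lower xi N1). pose proof (VV_nonneg xi (N1 + (k + N0))).
    rewrite plus_INR in H0. pose proof (pos_INR N0).
    assert (C + /2 < INR k * (E * d)).
    { assert (0 < E * d) by nra.
      apply (Rmult_lt_compat_l (E * d)) in Hk; auto. unfold Rdiv in Hk.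
      rewrite <- Rmult_assoc, (Rmult_comm (E*d)), Rmult_assoc, Rinv_r in Hk; lra. }
    assert (0 <= INR N0 * (E * d)) by (apply Rmult_le_pos; nra).
    lra.
Qed.

Definition nx (xi : path) : path := fun k => negb (xi k).

Definition PP (l : list bool) : R := Pp l + - Pp (map negb l).

Lemma cap_split xi n : capital PP xi n = capital Pp xi n + capital Pp (nx xi) n.
Proof.
  induction n. simpl. ring.
  simpl. rewrite IHn. unfold PP.
  assert (prefix (nx xi) n = map negb (prefix xi n)).
  { unfold prefix. rewrite map_map. reflexivity. }
  rewrite H. unfold nx. destruct (xi n); simpl; ring.
Qed.

Lemma spos_nx xi n : spos (nx xi) n = - spos xi n.
Proof. induction n. simpl. ring. simpl. rewrite IHn. unfold nx. destruct (xi n); simpl; ring. Qed.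

Theorem theorem3 : weakly_forces A3.
Proof.
  exists PP. split.
  - intros xi n. rewrite cap_split.
    pose proof (lowerc xi n). pose proof (lowerc (nx xi) n). lra.
  - intros xi HA. unfold A3 in HA. apply not_and_or in HA as [H | H].
    + pose proof (win xi H) as W. intros C N.
      destruct (W (C + /2) N) as [n [Hn Hc]]. exists n. split; auto.
      rewrite cap_split. pose proof (lowerc (nx xi) n). lra.
    + assert (H' : ~ limsup_infty (spos (nx xi))).
      { intro L. apply H. intros C N. destruct (L (- C) N) as [n [Hn Hc]].
        exists n. split; auto. rewrite spos_nx in Hc. lra. }
      pose proof (win _ H') as W. intros C N.
      destruct (W (C + /2) N) as [n [Hn Hc]]. exists n. split; auto.
      rewrite cap_split. pose proof (lowerc xi n). lra.
Qed.
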